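(* Let $\mathcal{T}$ be a directed poset, $X:\mathcal{T}\to\mathbf{Set}_*$ a diagram of pointed sets, $A$ an abelian group, and $h\in G(X,A)$. Then $h\in K(X,A)$ if and only if the set $\{|h(t)|:t\in\mathcal{T}\}$ is bounded.
   Context: A directed poset $\mathcal{T}$ is regarded as a category with a single morphism $t\to s$ whenever $t\ge s$; $\phi_{t,s}:X(t)\to X(s)$ denotes the structure map. For a pointed set $Y$, $Y\wedge A:=\bigoplus_{Y\setminus\{*\}}A$, with elements finitely supported pointed maps $y:Y\to A$, $s\mapsto y_s$; $\mathrm{supp}(y)=\{s:y_s\neq0\}$ and $|y|:=|\mathrm{supp}(y)|$; $sv$ denotes the element with value $v$ at $s$ and $0$ elsewhere ($*v=0$); pointed maps induce homomorphisms via $f_*(sv)=f(s)v$. Define $G(X,A):=\lim_\mathcal{T}(X\wedge A)$ and let $K(X,A)\subseteq G(X,A)$ be the image of the (injective) natural map $\rho:(\lim_\mathcal{T}X)\wedge A\to G(X,A)$, $\rho(xv)(t)=x(t)v$. *)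

(* Defs.v *)
From HB Require Import structures.
From mathcomp Require Import all_boot all_order all_algebra.
From mathcomp Require Import finmap.
Set Implicit Arguments. Unset Strict Implicit. Unset Printing Implicit Defensive.
Import GRing.Theory.
Local Open Scope ring_scope.
Local Open Scope fset_scope.

Definition directed_poset (T : Type) (le : T -> T -> Prop) : Prop :=
  [/\ (forall t, le t t),
      (forall t s, le t s -> le s t -> t = s),
      (forall t s r, le r s -> le s t -> le r t)
    & (forall a b, exists c, le a c /\ le b c)].

(* A diagram X : T -> Set_* over the poset regarded as a category with a
   morphism t -> s whenever t >= s; map H : X t -> X s for H : le s t. *)
Record pdiagram (T : Type) (le : T -> T -> Prop) := PDiagram {
  obj : T -> choiceType;
  pt : forall t, obj t;
  map : forall t s, le s t -> obj t -> obj s;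
  map_pt : forall t s (H : le s t), map H (pt t) = pt s;
  map_id : forall t (H : le t t) x, map H x = x;
  map_comp : forall t s r (H1 : le s t) (H2 : le r s) (H3 : le r t) x,
      map H2 (map H1 x) = map H3 x
}.

Section Smash.
Variable (A : zmodType).

(* An element of the pointed set Y smash A is a finitely supported map
   y : Y -> A with y * = 0 ; its support is finsupp y. *)
Definition in_smash (Y : choiceType) (p : Y) (y : {fsfun Y -> A with 0}) : Prop :=
  y p = 0.

Definition supp_size (Y : choiceType) (y : {fsfun Y -> A with 0}) : nat :=
  #|` finsupp y|.

(* induced homomorphism f_* : Y smash A -> Z smash A, f_*(sv) = f(s)v,
   with the value at the basepoint q of Z forced to be 0 (since pt v = 0). *)
Definition pushf (Y Z : choiceType) (q : Z) (f : Y -> Z)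
    (y : {fsfun Y -> A with 0}) : Z -> A :=
  fun z => if z == q then 0 else \sum_(x <- finsupp y | f x == z) y x.
End Smash.

Section Lim.
Variables (T : Type) (le : T -> T -> Prop) (X : pdiagram le) (A : zmodType).

(* Elements of G(X,A) = lim_T (X smash A) *)
Definition inG (h : forall t, {fsfun obj X t -> A with 0}) : Prop :=
  (forall t, in_smash (pt X t) (h t)) /\
  (forall t s (H : le s t) (z : obj X s),
      pushf (pt X s) (map H) (h t) z = h s z).

Definition limX := {x : forall t, obj X t |
                     forall t s (H : le s t), map H (x t) = x s}.

(* rho applied to the formal finite sum sum_i x_i v_i in (lim X) smash A :
   rho(sum_i x_i v_i)(t) = sum_i x_i(t) v_i in X(t) smash A (evaluated at z). *)
Definition rho (l : seq (limX * A)) (t : T) (z : obj X t) : A :=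
  if z == pt X t then 0
  else \sum_(p <- l | sval p.1 t == z) p.2.

(* K(X,A) = image of rho: every element of (lim X) smash A is a finite sum
   of elements x v, and rho is additive. *)
Definition inK (h : forall t, {fsfun obj X t -> A with 0}) : Prop :=
  exists l : seq (limX * A), forall t (z : obj X t), h t z = rho l z.
End Lim.

(* Main.v *)
Require Import Defs.
From mathcomp Require Import all_boot all_order all_algebra.
From mathcomp Require Import finmap.
From mathcomp Require Import zify.
From Stdlib Require Import ClassicalEpsilon ProofIrrelevance Classical.
Set Implicit Arguments. Unset Strict Implicit. Unset Printing Implicit Defensive.
Import GRing.Theory.
Local Open Scope ring_scope.
Local Open Scope fset_scope.

Section Proof8.
Variables (T : Type) (le : T -> T -> Prop) (HT : directed_poset le) (X : pdiagram le)
  (A : zmodType) (h : forall t, {fsfun obj X t -> A with 0}) (hG : inG h).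

Local Notation S t := (finsupp (h t)).

Lemma le_trans' r s t : le r s -> le s t -> le r t.
Proof. by case: HT => _ _ Htr _; apply: Htr. Qed.
Lemma le_dir a b : exists c, le a c /\ le b c. Proof. by case: HT. Qed.

Lemma map_irr s t (H1 H2 : le s t) x : (@Defs.map _ _ X _ _) H1 x = (@Defs.map _ _ X _ _) H2 x.
Proof. by rewrite (proof_irrelevance _ H1 H2). Qed.

Lemma mapC t s r (H1 : le s t) (H2 : le r s) (H3 : le r t) x :
  (@Defs.map _ _ X _ _) H2 ((@Defs.map _ _ X _ _) H1 x) = (@Defs.map _ _ X _ _) H3 x.
Proof. exact (@Defs.map_comp _ _ X t s r H1 H2 H3 x). Qed.

Lemma h_pt t : h t (pt X t) = 0. Proof. by case: hG => H _; apply: H. Qed.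

Lemma inS t x : (x \in S t) = (h t x != 0). Proof. by rewrite mem_finsupp. Qed.

Lemma h_push s t (H : le s t) z : z != pt X s ->
  h s z = \sum_(x <- S t | (@Defs.map _ _ X _ _) H x == z) h t x.
Proof. move=> Hz; case: hG => _ Hc; by rewrite -(Hc t s H z) /pushf (negbTE Hz). Qed.

Lemma F3 s t (H : le s t) z : z \in S s -> exists2 x, x \in S t & (@Defs.map _ _ X _ _) H x = z.
Proof.
move=> Hz. have Hzp : z != pt X s.
  by apply/eqP => E; move: Hz; rewrite inS E h_pt eqxx.
move: Hz; rewrite inS (h_push H Hzp).
case: (boolP (has (fun x => (@Defs.map _ _ X _ _) H x == z) (S t))).
  by case/hasP => x Hx /eqP E _; exists x.
move/hasPn => Hn; rewrite big1_seq ?eqxx // => x /andP[E Hx].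
by move: (Hn x Hx); rewrite E.
Qed.

Variables (t0 : T) (Hmax : forall t, (#|` S t| <= #|` S t0|)%N).

Definition pre (c : T) (y : obj X t0) : obj X c :=
  epsilon (inhabits (pt X c))
    (fun x => x \in S c /\ exists H : le t0 c, (@Defs.map _ _ X _ _) H x = y).

Lemma pre_spec c (Hc : le t0 c) y : y \in S t0 ->
  pre c y \in S c /\ (@Defs.map _ _ X _ _) Hc (pre c y) = y.
Proof.
move=> Hy; have [x Hx E] := F3 Hc Hy.
have := epsilon_spec (inhabits (pt X c))
   (fun x => x \in S c /\ exists H : le t0 c, (@Defs.map _ _ X _ _) H x = y).
case.
  by exists x; split => //; exists Hc.
by move=> H1 [H2 E2]; split => //; rewrite (map_irr Hc H2).
Qed.

Lemma pre_uniq c (Hc : le t0 c) : uniq (seq.map (pre c) (S t0)).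
Proof.
rewrite map_inj_in_uniq ?fset_uniq // => y1 y2 H1 H2 E.
by rewrite -(pre_spec Hc H1).2 -(pre_spec Hc H2).2 E.
Qed.

Lemma pre_mem c (Hc : le t0 c) : seq.map (pre c) (S t0) =i S c.
Proof.
have Hsub : {subset seq.map (pre c) (S t0) <= S c}.
  by move=> x /mapP [y Hy ->]; exact: (pre_spec Hc Hy).1.
have := uniq_min_size (pre_uniq Hc) Hsub. rewrite size_map.
by case/(_ (Hmax c)).
Qed.

Lemma pre_perm c (Hc : le t0 c) : perm_eq (seq.map (pre c) (S t0)) (S c).
Proof. apply: uniq_perm; [exact: pre_uniq | exact: fset_uniq | exact: pre_mem]. Qed.

Lemma inj_S c (Hc : le t0 c) x1 x2 : x1 \in S c -> x2 \in S c ->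
  (@Defs.map _ _ X _ _) Hc x1 = (@Defs.map _ _ X _ _) Hc x2 -> x1 = x2.
Proof.
rewrite -!(pre_mem Hc) => /mapP[y1 Hy1 ->] /mapP[y2 Hy2 ->].
by rewrite (pre_spec Hc Hy1).2 (pre_spec Hc Hy2).2 => ->.
Qed.

Lemma F4 c (Hc : le t0 c) y : y \in S t0 -> h c (pre c y) = h t0 y.
Proof.
move=> Hy. have Hyp : y != pt X t0.
  by apply/eqP => E; move: Hy; rewrite inS E h_pt eqxx.
rewrite (h_push Hc Hyp) -(perm_big _ (pre_perm Hc)) big_map.
rewrite big_seq_cond (eq_bigl (fun y' => (y' \in S t0) && (y' == y))); last first.
  by move=> y'; case H: (y' \in S t0) => //=; rewrite (pre_spec Hc H).2.
by rewrite -big_seq_cond -big_filter filter_pred1_uniq ?fset_uniq // big_seq1.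
Qed.

Lemma pre_down c d (Hc : le t0 c) (Hcd : le c d) y : y \in S t0 ->
  (@Defs.map _ _ X _ _) Hcd (pre d y) = pre c y.
Proof.
move=> Hy. have Hd := le_trans' Hc Hcd.
have [Hpc Epc] := pre_spec Hc Hy.
have [x Hx Ex] := F3 Hcd Hpc.
have [Hpd Epd] := pre_spec Hd Hy.
suff -> : pre d y = x by [].
apply: (inj_S (Hc:=Hd) Hpd Hx). by rewrite Epd -(mapC Hcd Hc Hd) Ex Epc.
Qed.

Lemma pre_indep t c c' (Ht : le t c) (Ht' : le t c') (Hc : le t0 c) (Hc' : le t0 c') y :
  y \in S t0 -> (@Defs.map _ _ X _ _) Ht (pre c y) = (@Defs.map _ _ X _ _) Ht' (pre c' y).
Proof.
move=> Hy; have [d [Hcd Hc'd]] := le_dir c c'.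
rewrite -(pre_down Hc Hcd Hy) -(pre_down Hc' Hc'd Hy).
by rewrite (mapC Hcd Ht (le_trans' Ht Hcd)) (mapC Hc'd Ht' (le_trans' Ht Hcd)).
Qed.

Definition cup t : {c | le t c /\ le t0 c} :=
  constructive_indefinite_description _ (le_dir t t0).
Definition xl y t : obj X t :=
  (@Defs.map _ _ X _ _) (proj1 (proj2_sig (cup t))) (pre (proj1_sig (cup t)) y).

Lemma xl_spec y t c (Ht : le t c) (Hc : le t0 c) : y \in S t0 ->
  xl y t = (@Defs.map _ _ X _ _) Ht (pre c y).
Proof. move=> Hy; rewrite /xl; case: (cup t) => c1 [H1 H2] /=; exact: pre_indep. Qed.

Lemma xl_compat y : y \in S t0 ->
  forall t s (H : le s t), (@Defs.map _ _ X _ _) H (xl y t) = xl y s.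
Proof.
move=> Hy t s H; have [c [Ht Hc]] := le_dir t t0.
by rewrite (xl_spec Ht Hc Hy) (xl_spec (le_trans' H Ht) Hc Hy) (mapC _ _ (le_trans' H Ht)).
Qed.

Definition limP (x : forall t, obj X t) : Prop :=
  forall t s (H : le s t), (@Defs.map _ _ X _ _) H (x t) = x s.
Definition ptlim : limX X :=
  @exist _ limP (fun t => pt X t) (fun t s H => @Defs.map_pt _ _ X t s H).

Definition xlim (y : obj X t0) : limX X :=
  match Sumbool.sumbool_of_bool (y \in S t0) with
  | left Hy => @exist _ limP (xl y) (xl_compat Hy)
  | right _ => ptlim end.

Lemma xlimE y : y \in S t0 -> sval (xlim y) = xl y.
Proof.
move=> Hy; rewrite /xlim; case: (Sumbool.sumbool_of_bool (y \in S t0)) => [E|E] /=; first by [].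
by rewrite E in Hy.
Qed.

Lemma inK_of_max : inK h.
Proof.
exists [seq (xlim y, h t0 y) | y <- S t0] => t z.
rewrite /rho; case: ifP => [/eqP -> | Hz]; first by apply: h_pt.
have [c [Ht Hc]] := le_dir t t0.
rewrite (h_push Ht (negbT Hz)) -(perm_big _ (pre_perm Hc)) !big_map.
rewrite [LHS]big_seq_cond [RHS]big_seq_cond.
apply: eq_big => y.
  case Hy: (y \in S t0); last by [].
  by rewrite !andTb -[(xlim y, h t0 y).1]/(xlim y) xlimE // (xl_spec Ht Hc Hy).
by case/andP => Hy _; rewrite -[(xlim y, h t0 y).2]/(h t0 y); apply: F4.
Qed.

End Proof8.

Lemma exists_max (T : Type) (f : T -> nat) N (HN : forall t, (f t <= N)%N) (t1 : T) :
  exists t0, forall t, (f t <= f t0)%N.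
Proof.
suff H : forall k t, (N - k <= f t)%N -> exists t0, forall t, (f t <= f t0)%N.
  by apply: (H N t1); rewrite subnn.
elim=> [|k IH] t Ht.
  by exists t => s; apply: leq_trans (HN s) _; rewrite subn0 in Ht.
case: (classic (exists s, (f t < f s)%N)) => [[s Hs]|Hn].
  apply: (IH s); lia.
exists t => s; rewrite leqNgt; apply/negP => Hs; apply: Hn; by exists s.
Qed.

Lemma sum_nz (I : Type) (K : eqType) (B : zmodType) (l : seq I) (f : I -> K)
  (g : I -> B) x : (\sum_(p <- l | f p == x) g p != 0)%R -> x \in seq.map f l.
Proof.
elim: l => [|p l IH]; first by rewrite big_nil eqxx.
rewrite big_cons /= inE; case: (f p =P x) => [E _|_ H]; first by rewrite E eqxx.
by rewrite IH ?orbT.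
Qed.

Theorem mainTheorem8 (T : Type) (le : T -> T -> Prop)
  (HT : directed_poset le) (X : pdiagram le) (A : zmodType)
  (h : forall t, {fsfun obj X t -> A with 0%R}) (hG : inG h) :
  inK h <-> exists N : nat, forall t, (supp_size (h t) <= N)%N.
Proof.
split.
- case=> l Hl; exists (size l) => t.
  rewrite /supp_size -(size_map (fun p : limX X * A => sval p.1 t) l).
  apply: uniq_leq_size; first exact: fset_uniq.
  move=> x; rewrite mem_finsupp Hl /rho. case: ifP => [_|_]; first by rewrite eqxx.
  exact: sum_nz.
- case=> N HN.
  case: (classic (exists t : T, True)) => [[t1 _]|Hne].
    have [t0 Ht0] := exists_max HN t1.
    exact: (inK_of_max HT hG Ht0).
  by exists [::] => t; exfalso; apply: Hne; exists t.
Qed.
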